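(* Let $T=((\Omega,\mathcal{A}),\{(\Omega,\mathcal{M}_i)\}_{i\in N},\{t_i\}_{i\in N})$ be a type space. The players' beliefs in $T$ are consistent if and only if there exists a common certainty component $S\subseteq\Omega$ such that the players' beliefs in the induced type space $T_S$ over $S$ are consistent.
   Context: A field on a set $X$ is a collection of subsets of $X$ containing $X$ and closed under complements and finite intersections. For a field $\mathcal{A}$ on $\Omega$, $\mathrm{pba}(\Omega,\mathcal{A})$ is the set of finitely additive nonnegative $P:\mathcal{A}\to\mathbb{R}$ with $P(\Omega)=1$; $B(\Omega,\mathcal{A})$ the sup-norm closure of the linear span of indicators of sets in $\mathcal{A}$; the space of bounded finitely additive set functions carries the weak* topology (weakest making $\mu\mapsto\int f\,d\mu$ continuous for all $f\in B(\Omega,\mathcal{A})$), $\overline{\,\cdot\,}^\ast$ denotes weak* closure. A type space is $((\Omega,\mathcal{A}),\{(\Omega,\mathcal{M}_i)\}_{i\in N},\{t_i\}_{i\in N})$ with $N$ a nonempty set of players, fields $\mathcal{M}_i\subseteq\mathcal{A}$ on a set $\Omega$, and $t_i:\Omega\times\mathcal{A}\to[0,1]$ with: $t_i(\omega,\cdot)\in\mathrm{pba}(\Omega,\mathcal{A})$; $t_i(\cdot,E)\in B(\Omega,\mathcal{M}_i)$ for all $E\in\mathcal{A}$; $t_i(\omega,E)=1$ whenever $E\in\mathcal{M}_i$, $\omega\in E$. For each player $i$, $\Pi_i=\overline{\mathrm{conv}\{t_i(\omega,\cdot):\omega\in\Omega\}}^\ast$ (equivalently the $P\in\mathrm{pba}(\Omega,\mathcal{A})$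 with $P(E\cap F)=\int_F t_i(\cdot,E)\,dP$ for all $E\in\mathcal{A},F\in\mathcal{M}_i$). The players' beliefs in a type space are consistent if $\bigcap_{i\in I}\Pi_i\ne\emptyset$ for every finite set $I$ of players. A nonempty $S\subseteq\Omega$ is a common certainty component if there is $E\in\mathcal{A}$ with $E\subseteq S$ and $t_i(\omega,E)=1$ for all $\omega\in S$ and all $i\in N$. The induced type space is $T_S=((S,\mathcal{A}^S),\{(S,\mathcal{M}_i^S)\}_{i\in N},\{t_i^S\}_{i\in N})$ with $\mathcal{A}^S=\{F\cap S:F\in\mathcal{A}\}$, $\mathcal{M}_i^S=\{F\cap S:F\in\mathcal{M}_i\}$, $t_i^S(\omega,F\cap S)=t_i(\omega,F)$ for $\omega\in S$, $F\in\mathcal{A}$ (this is a type space). *)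

(* Defs.v *)
From HB Require Import structures.
From mathcomp Require Import all_boot all_order all_algebra.
From mathcomp Require Import boolp classical_sets cardinality reals.
Import Order.TTheory GRing.Theory Num.Theory.
Local Open Scope classical_set_scope.
Local Open Scope ring_scope.

Section TypeSpaces.
Context {R : realType}.

Definition is_field {X : Type} (F : set (set X)) : Prop :=
  F setT /\ (forall E, F E -> F (~` E)) /\
  (forall E G, F E -> F G -> F (E `&` G)).

Definition ind {X : Type} (E : set X) (x : X) : R := if `[< E x >] then 1 else 0.

Definition simple_fn {X : Type} {n : nat} (c : 'I_n -> R) (B : 'I_n -> set X) (x : X) : R :=
  \sum_(k < n) c k * ind (B k) x.

Definition B_space {X : Type} (F : set (set X)) (f : X -> R) : Prop :=
  forall eps : R, 0 < eps -> exists n (c : 'I_n -> R) (B : 'I_n -> set X),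
    (forall k, F (B k)) /\ (forall x, `|f x - simple_fn c B x| <= eps).

Definition fin_additive {X : Type} (A : set (set X)) (mu : set X -> R) : Prop :=
  forall E G, A E -> A G -> E `&` G = set0 -> mu (E `|` G) = mu E + mu G.

Definition ba_fun {X : Type} (A : set (set X)) (mu : set X -> R) : Prop :=
  fin_additive A mu /\ exists c : R, forall E, A E -> `|mu E| <= c.

Definition pba {X : Type} (A : set (set X)) (P : set X -> R) : Prop :=
  fin_additive A P /\ (forall E, A E -> 0 <= P E) /\ P setT = 1.

Definition is_ba_integral {X : Type} (A : set (set X)) (mu : set X -> R)
    (f : X -> R) (r : R) : Prop :=
  forall eps : R, 0 < eps -> exists2 delta : R, 0 < delta &
    forall n (c : 'I_n -> R) (B : 'I_n -> set X), (forall k, A (B k)) ->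
      (forall x, `|f x - simple_fn c B x| <= delta) ->
      `|\sum_(k < n) c k * mu (B k) - r| <= eps.

Definition ba_integral {X : Type} (A : set (set X)) (mu : set X -> R)
    (f : X -> R) : R :=
  xget 0 [set r | is_ba_integral A mu f r].

Definition conv_hull {X : Type} (C : set (set X -> R)) : set (set X -> R) :=
  [set Q | exists n (lam : 'I_n.+1 -> R) (P : 'I_n.+1 -> set X -> R),
     (forall k, 0 <= lam k) /\ \sum_(k < n.+1) lam k = 1 /\
     (forall k, C (P k)) /\ Q = (fun E => \sum_(k < n.+1) lam k * P k E)].

(* weak* closure (w.r.t. B(X,A)) in the space of bounded finitely additive
   set functions on A; written out through basic weak* neighbourhoods *)
Definition weak_star_closure {X : Type} (A : set (set X))
    (C : set (set X -> R)) : set (set X -> R) :=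
  [set mu | ba_fun A mu /\
     forall n (f : 'I_n -> X -> R), (forall k, B_space A (f k)) ->
     forall eps : R, 0 < eps ->
       exists2 nu, C nu &
         forall k, `|ba_integral A mu (f k) - ba_integral A nu (f k)| < eps].

Definition type_space {Om N : Type} (A : set (set Om)) (M : N -> set (set Om))
    (t : N -> Om -> set Om -> R) : Prop :=
  inhabited N /\ is_field A /\
  (forall i, is_field (M i) /\ M i `<=` A) /\
  (forall i w E, A E -> 0 <= t i w E <= 1) /\
  (forall i w, pba A (t i w)) /\
  (forall i E, A E -> B_space (M i) (fun w => t i w E)) /\
  (forall i E w, M i E -> E w -> t i w E = 1).

Definition Pi {Om N : Type} (A : set (set Om)) (t : N -> Om -> set Om -> R)
    (i : N) : set (set Om -> R) :=
  weak_star_closure A (conv_hull (range (t i))).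

Definition consistent {Om N : Type} (A : set (set Om)) (M : N -> set (set Om))
    (t : N -> Om -> set Om -> R) : Prop :=
  forall I : set N, finite_set I -> exists P, forall i, I i -> Pi A t i P.

Definition common_certainty_component {Om N : Type} (A : set (set Om))
    (t : N -> Om -> set Om -> R) (S : set Om) : Prop :=
  S !=set0 /\ exists E, A E /\ E `<=` S /\ (forall i w, S w -> t i w E = 1).

(* trace field {F cap S : F in F0} on the carrier S *)
Definition trace {Om : Type} (S : set Om) (F0 : set (set Om))
    : set (set {x : Om | S x}) :=
  [set G | exists2 H, F0 H & G = (@proj1_sig Om S) @^-1` H].

(* t_i^S(w, F cap S) = t_i(w, F) *)
Definition induced_t {Om N : Type} (S : set Om) (A : set (set Om))
    (t : N -> Om -> set Om -> R) : N -> {x : Om | S x} -> set {x : Om | S x} -> R :=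
  fun i w G => t i (proj1_sig w)
                 (xget set0 [set H | A H /\ G = (@proj1_sig Om S) @^-1` H]).

End TypeSpaces.

(* Main.v *)
Require Import Defs.
From HB Require Import structures.
From mathcomp Require Import all_boot all_order all_algebra.
From mathcomp Require Import boolp classical_sets cardinality reals.
From mathcomp Require Import ring lra.
Import Order.TTheory GRing.Theory Num.Theory.
Local Open Scope classical_set_scope.
Local Open Scope ring_scope.
Set Implicit Arguments. Unset Strict Implicit.

Section Aux.
Context {R : realType}.

Lemma ind_in {X} (E : set X) x : E x -> ind E x = 1 :> R.
Proof. by move=> Ex; rewrite /ind asboolT. Qed.
Lemma ind_out {X} (E : set X) x : ~ E x -> ind E x = 0 :> R.
Proof. by move=> Ex; rewrite /ind asboolF. Qed.

Lemma fa_set0 {X} (F : set (set X)) (mu : set X -> R) :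
  fin_additive F mu -> F set0 -> mu set0 = 0.
Proof.
move=> ad F0; have := ad set0 set0 F0 F0 (setI0 _).
rewrite setU0 => h; lra.
Qed.

Lemma field_set0 {X} (F : set (set X)) : is_field F -> F set0.
Proof. by case=> FT [FC _]; rewrite -setCT; apply: FC. Qed.

Lemma field_setU {X} (F : set (set X)) E G : is_field F -> F E -> F G -> F (E `|` G).
Proof.
case=> FT [FC FI] FE FG; rewrite -(setCK (E `|` G)) setCU; apply: (FC); apply: (FI); exact: (FC).
Qed.

Lemma fa_split {X} (F : set (set X)) (mu : set X -> R) E D :
  is_field F -> fin_additive F mu -> F E -> F D ->
  mu E = mu (E `&` D) + mu (E `&` ~` D).
Proof.
move=> hF ad FE FD; case: (hF) => _ [FC FI].
rewrite -ad; [|exact: (FI)|by apply: (FI) => //; apply: (FC)|].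
  by rewrite -setIUr setUv setIT.
by rewrite setIACA setICr setI0.
Qed.

Lemma small_aux {X} (F : set (set X)) (mu : set X -> R) : is_field F -> fin_additive F mu ->
  forall n (c : 'I_n -> R) (B : 'I_n -> set X), (forall k, F (B k)) ->
  forall (a d : R) (D : set X), F D ->
  (forall x, D x -> `|a + \sum_(k < n) c k * ind (B k) x| <= d) ->
  exists Dp Dm, [/\ F Dp, F Dm, Dp `<=` D, Dm `<=` D &
     `|a * mu D + \sum_(k < n) c k * mu (B k `&` D)| <= d * (mu Dp - mu Dm)].
Proof.
move=> hF ad; have F0 := field_set0 hF; have m0 := fa_set0 ad F0.
case: (hF) => FT [FC FI].
elim=> [|n IH] c B FB a d D FD hD.
  have [[x Dx]|nD] := pselect (exists x, D x); last first.
    have -> : D = set0 by rewrite predeqE => x; split => // Dx; apply: nD; exists x.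
    exists set0, set0; split => //; rewrite m0 !big_ord0 mulr0 addr0 normr0 subr0 mulr0 //.
  have := hD x Dx; rewrite big_ord0 addr0 => ha.
  have [m_ge0|m_lt0] := leP 0 (mu D).
    exists D, set0; split => //; rewrite big_ord0 addr0 m0 subr0 normrM (ger0_norm m_ge0).
    by apply: ler_wpM2r.
  exists set0, D; split => //; rewrite big_ord0 addr0 m0 sub0r normrM (ltr0_norm m_lt0).
  by apply: ler_wpM2r => //; rewrite oppr_ge0 ltW.
pose Bn := B ord_max.
pose D1 := D `&` Bn; pose D2 := D `&` ~` Bn.
have FD1 : F D1 by apply: FI => //; apply: FB.
have FD2 : F D2 by apply: FI => //; apply: FC; apply: FB.
pose c' := fun k : 'I_n => c (widen_ord (leqnSn n) k).
pose B' := fun k : 'I_n => B (widen_ord (leqnSn n) k).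
have FB' : forall k, F (B' k) by move=> k; apply: FB.
have h1x : forall x, D1 x -> `|(a + c ord_max) + \sum_(k<n) c' k * ind (B' k) x| <= d.
  move=> x [Dx Bx]; move: (hD x Dx); rewrite big_ord_recr /= (ind_in Bx) mulr1.
  move=> h; apply: (le_trans _ h); rewrite le_eqVlt; apply/orP; left; apply/eqP; congr (`|_|); rewrite /c' /B'; ring.
have h2x : forall x, D2 x -> `|a + \sum_(k<n) c' k * ind (B' k) x| <= d.
  move=> x [Dx Bx]; move: (hD x Dx); rewrite big_ord_recr /= (ind_out Bx) mulr0.
  by rewrite addr0.
have [Dp1 [Dm1 [Fp1 Fm1 sp1 sm1 h1]]] := IH c' B' FB' (a + c ord_max) d D1 FD1 h1x.
have [Dp2 [Dm2 [Fp2 Fm2 sp2 sm2 h2]]] := IH c' B' FB' a d D2 FD2 h2x.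
have disj : forall U V, U `<=` D1 -> V `<=` D2 -> U `&` V = set0.
  move=> U V sU sV; rewrite predeqE => x; split => // -[/sU [_ b1] /sV [_ b2]]; exact: b2.
exists (Dp1 `|` Dp2), (Dm1 `|` Dm2); split.
- exact: field_setU.
- exact: field_setU.
- by move=> x [/sp1 []|/sp2 []].
- by move=> x [/sm1 []|/sm2 []].
rewrite (ad _ _ Fp1 Fp2 (disj _ _ sp1 sp2)) (ad _ _ Fm1 Fm2 (disj _ _ sm1 sm2)).
have -> : a * mu D + \sum_(k < n.+1) c k * mu (B k `&` D) =
  ((a + c ord_max) * mu D1 + \sum_(k < n) c' k * mu (B' k `&` D1)) +
  (a * mu D2 + \sum_(k < n) c' k * mu (B' k `&` D2)).
  rewrite big_ord_recr /= (fa_split hF ad FD (FB ord_max)) -/Bn -/D1 -/D2.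
  have -> : B ord_max `&` D = D1 by rewrite /D1 setIC.
  have -> : \sum_(i < n) c (widen_ord (leqnSn n) i) * mu (B (widen_ord (leqnSn n) i) `&` D) =
     \sum_(k < n) c' k * mu (B' k `&` D1) + \sum_(k < n) c' k * mu (B' k `&` D2).
    rewrite -big_split /=; apply: eq_bigr => k _.
    rewrite (fa_split hF ad _ (FB ord_max)); last by apply: FI => //; apply: FB.
    by rewrite /D1 /D2 /c' /B' !setIA mulrDr.
  ring.
apply: (le_trans (ler_normD _ _)).
have -> : d * (mu Dp1 + mu Dp2 - (mu Dm1 + mu Dm2)) = d * (mu Dp1 - mu Dm1) + d * (mu Dp2 - mu Dm2) by ring.
exact: lerD.
Qed.

Lemma small_bound {X} (F : set (set X)) (mu : set X -> R) c0 n (c : 'I_n -> R) B a d D :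
  is_field F -> fin_additive F mu -> (forall E, F E -> `|mu E| <= c0) ->
  (forall k, F (B k)) -> F D -> 0 <= d ->
  (forall x, D x -> `|a + \sum_(k < n) c k * ind (B k) x| <= d) ->
  `|a * mu D + \sum_(k < n) c k * mu (B k `&` D)| <= d * (c0 + c0).
Proof.
move=> hF ad bd FB FD d0 hD.
have [Dp [Dm [Fp Fm _ _ h]]] := small_aux hF ad FB FD hD.
apply: (le_trans h); apply: ler_wpM2l => //.
have := bd _ Fp; have := bd _ Fm; have := ler_norm (mu Dp); have := ler_norm (- mu Dm).
rewrite normrN; lra.
Qed.

Lemma int_ind {X} (F : set (set X)) (mu : set X -> R) G :
  is_field F -> ba_fun F mu -> F G -> is_ba_integral F mu (ind G) (mu G).
Proof.
move=> hF [ad [c0 bd]] FG eps eps0.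
have c00 : 0 <= c0.
  by case: hF => FT _; apply: le_trans (bd _ FT).
case: (hF) => FT [FC FI].
have k0 : 0 < 4 * c0 + 1 by lra.
exists (eps / (4 * c0 + 1)); first exact: divr_gt0.
move=> n c B FB hB.
set d := eps / (4 * c0 + 1).
have d0 : 0 <= d by apply: ltW; exact: divr_gt0.
have h1 := @small_bound _ F mu c0 n c B (-1) d G hF ad bd FB FG d0.
have h2 := @small_bound _ F mu c0 n c B 0 d (~` G) hF ad bd FB (FC _ FG) d0.
have e1 : forall x, G x -> `|-1 + \sum_(k < n) c k * ind (B k) x| <= d.
  move=> x Gx; have := hB x; rewrite /simple_fn (ind_in Gx) -normrN.
  by rewrite opprB addrC.
have e2 : forall x, (~` G) x -> `|0 + \sum_(k < n) c k * ind (B k) x| <= d.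
  move=> x Gx; have := hB x; rewrite /simple_fn (ind_out Gx) -normrN.
  by rewrite opprB add0r subr0.
have := h1 e1; have := h2 e2.
have -> : \sum_(k < n) c k * mu (B k) - mu G =
   (-1 * mu G + \sum_(k < n) c k * mu (B k `&` G)) +
   (0 * mu (~` G) + \sum_(k < n) c k * mu (B k `&` ~` G)).
  rewrite (eq_bigr (fun k => c k * mu (B k `&` G) + c k * mu (B k `&` ~` G))); last first.
    by move=> k _; rewrite -mulrDr (fa_split hF ad (FB k) FG).
  rewrite big_split /=; ring.
move=> g2 g1; apply: (le_trans (ler_normD _ _)).
have : d * (c0 + c0) + d * (c0 + c0) <= eps.
  rewrite -mulrDr /d mulrC mulrA ler_pdivrMr //; nra.
have := lerD g1 g2; lra.
Qed.

Lemma ba_int_unique {X} (F : set (set X)) (mu : set X -> R) f r :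
  B_space F f -> is_ba_integral F mu f r -> ba_integral F mu f = r.
Proof.
move=> Bf hr; rewrite /ba_integral; apply: xget_unique => // r' hr'.
apply/eqP; rewrite -subr_eq0 -normr_le0; apply/ler_addgt0Pr => e e0.
rewrite add0r.
have e20 : 0 < e / 2 by apply: divr_gt0.
have [d1 d10 h1] := hr' _ e20; have [d2 d20 h2] := hr _ e20.
have m0 : 0 < Num.min d1 d2 by rewrite lt_min d10 d20.
have [n [c [B [FB hB]]]] := Bf _ m0.
have ml : Num.min d1 d2 <= d1 by rewrite ge_min lexx.
have mr : Num.min d1 d2 <= d2 by rewrite ge_min lexx orbT.
have g1 := h1 n c B FB (fun x => le_trans (hB x) ml).
have g2 := h2 n c B FB (fun x => le_trans (hB x) mr).
have := ler_normB (\sum_(k < n) c k * mu (B k) - r') (\sum_(k < n) c k * mu (B k) - r).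
have -> : \sum_(k < n) c k * mu (B k) - r' - (\sum_(k < n) c k * mu (B k) - r) = - (r' - r) by ring.
rewrite normrN; lra.
Qed.


Lemma split_l m n (i : 'I_m) : split (lshift n i) = inl i.
Proof. exact: (unsplitK (inl i)). Qed.
Lemma split_r m n (j : 'I_n) : split (rshift m j) = inr j.
Proof. exact: (unsplitK (inr j)). Qed.

Lemma sum_split m n (G : 'I_m + 'I_n -> R) :
  \sum_(k < m + n) G (split k) = \sum_(i < m) G (inl i) + \sum_(j < n) G (inr j).
Proof.
rewrite big_split_ord /=; congr (_ + _); apply: eq_bigr => i _.
  by rewrite split_l. by rewrite split_r.
Qed.

Lemma ind_I_in {X} (H E : set X) x : E x -> ind (H `&` E) x = ind H x :> R.
Proof.
move=> Ex; have [Hx|Hx] := pselect (H x).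
  by rewrite !ind_in.
by rewrite !ind_out // => -[].
Qed.
Lemma ind_I_out {X} (H E : set X) x : ~ E x -> ind (H `&` E) x = 0 :> R.
Proof. by move=> Ex; rewrite ind_out // => -[]. Qed.

Lemma Bspace_ind {X} (F : set (set X)) G : F G -> B_space F (@ind R X G).
Proof.
move=> FG eps eps0; exists 1%N, (fun _ => 1), (fun _ => G); split => // x.
by rewrite /simple_fn big_ord1 mul1r subrr normr0 ltW.
Qed.

Section Transfer.
Variables (X : Type) (S : set X) (A : set (set X)) (E : set X).
Hypotheses (hA : is_field A) (AE : A E) (ES : E `<=` S).

Notation val := (@proj1_sig X S).

Lemma trace_pre H : A H -> trace S A (val @^-1` H).
Proof. by move=> AH; exists H. Qed.

Lemma trace_field : is_field (trace S A).
Proof.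
case: hA => AT [AC AI]; split; [|split].
- by exists setT.
- by move=> _ [H AH ->]; exists (~` H) => //; apply: AC.
- by move=> _ _ [H AH ->] [G AG ->]; exists (H `&` G) => //; apply: AI.
Qed.

Lemma transfer (mu : set X -> R) (mu' : set {x | S x} -> R) f :
  (forall H, A H -> mu H = mu' (val @^-1` H)) ->
  (forall H, A H -> mu (H `&` ~` E) = 0) ->
  fin_additive A mu ->
  B_space A f ->
  ba_integral A mu f = ba_integral (trace S A) mu' (f \o val).
Proof.
move=> h1 h2 ad Bf; case: (hA) => AT [AC AI].
have mE : forall H, A H -> mu H = mu (H `&` E).
  by move=> H AH; rewrite (fa_split hA ad AH AE) h2 // addr0.
rewrite /ba_integral; congr xget; rewrite predeqE => r; split => hr eps eps0.
- have [dl dl0 hd] := hr eps eps0; exists dl => // n c B' FB' hB'.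
  have : forall k, exists H, A H /\ B' k = val @^-1` H.
    by move=> k; case: (FB' k) => H AH e; exists H.
  move=> /choice [H hH].
  have [n0 [d [D [FD hD]]]] := Bf dl dl0.
  pose cs := fun s : 'I_n + 'I_n0 => match s with inl i => c i | inr j => d j end.
  pose Bs := fun s : 'I_n + 'I_n0 => match s with inl i => H i `&` E | inr j => D j `&` ~` E end.
  have FB2 : forall k, A (Bs (split k)).
    move=> k; case: (split k) => [i|j] /=; apply: AI => //.
      by case: (hH i). by apply: AC.
  have := hd _ (fun k => cs (split k)) (fun k => Bs (split k)) FB2.
  have -> : \sum_(k < n + n0) cs (split k) * mu (Bs (split k)) =
            \sum_(k < n) c k * mu' (B' k).
    rewrite (sum_split (fun s => cs s * mu (Bs s))) /=.
    rewrite [X in _ + X]big1 ?addr0; last by move=> j _; rewrite h2 ?mulr0.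
    apply: eq_bigr => i _; case: (hH i) => AH ->; rewrite -h1 // -mE //.
  apply => x.
  rewrite /simple_fn (sum_split (fun s => cs s * ind (Bs s) x)) /=.
  have [Ex|nEx] := pselect (E x).
    rewrite [\sum_(j < n0) _]big1 ?addr0; last first.
      by move=> j _; rewrite ind_I_out ?mulr0 // => /(_ Ex).
    have := hB' (exist _ x (ES Ex)); rewrite /simple_fn /=.
    congr (`|_ - _| <= _); apply: eq_bigr => i _; rewrite ind_I_in //.
    by case: (hH i) => _ ->.
  rewrite big1 ?add0r; last by move=> i _; rewrite ind_I_out ?mulr0.
  have := hD x; rewrite /simple_fn.
  congr (`|_ - _| <= _); apply: eq_bigr => j _; rewrite ind_I_in //.
- have [dl dl0 hd] := hr eps eps0; exists dl => // n c B FB hB.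
  have := hd n c (fun k => val @^-1` (B k)) (fun k => trace_pre (FB k)) (fun x => hB (val x)).
  congr (`|_ - _| <= _); apply: eq_bigr => k _; rewrite h1 //.
Qed.


Lemma pba_conc (P : set X -> R) H : pba A P -> P E = 1 -> A H -> P (H `&` ~` E) = 0.
Proof.
move=> [ad [nn PT]] PE AH; case: (hA) => AT [AC AI].
have hC : P (~` E) = 0.
  have := ad E (~` E) AE (AC _ AE) (setICr E); rewrite setUv PT PE => h; lra.
have := fa_split hA ad (AC _ AE) AH; rewrite hC setIC => h.
have := nn _ (AI _ _ AH (AC _ AE)); have := nn (~` E `&` ~` H) (AI _ _ (AC _ AE) (AC _ AH)).
lra.
Qed.

Lemma conv_ba n (lam : 'I_n.+1 -> R) (Q : 'I_n.+1 -> set X -> R) :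
  (forall k, 0 <= lam k) -> \sum_(k < n.+1) lam k = 1 -> (forall k, pba A (Q k)) ->
  (forall k F, A F -> Q k F <= 1) ->
  ba_fun A (fun F => \sum_(k < n.+1) lam k * Q k F).
Proof.
move=> l0 l1 hQ hQ1; split.
  move=> F G AF AG d; rewrite -big_split; apply: eq_bigr => k _.
  by case: (hQ k) => ad _; rewrite ad // mulrDr.
exists 1 => F AF; rewrite ger0_norm; last first.
  apply: sumr_ge0 => k _; apply: mulr_ge0 => //; case: (hQ k) => _ [nn _]; exact: nn.
rewrite -l1; apply: ler_sum => k _; rewrite -{2}(mulr1 (lam k)); apply: ler_wpM2l => //.
exact: hQ1.
Qed.

Lemma mu'_additive (mu : set X -> R) (mu' : set {x | S x} -> R) :
  fin_additive A mu -> (forall H, A H -> mu (H `&` ~` E) = 0) ->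
  (forall H, A H -> mu H = mu' (val @^-1` H)) -> fin_additive (trace S A) mu'.
Proof.
move=> ad h2 h1 _ _ [H1 AH1 ->] [H2 AH2 ->] dj.
case: (hA) => AT [AC AI].
have mE : forall H, A H -> mu H = mu (H `&` E).
  by move=> H AH; rewrite (fa_split hA ad AH AE) h2 // addr0.
rewrite -preimage_setU -!h1 //; last exact: field_setU.
rewrite mE; last exact: field_setU.
rewrite setIUl ad ?(mE H1) ?(mE H2) //; try (apply: AI => //).
rewrite predeqE => x; split => // -[[h1x Ex] [h2x _]].
have : (val @^-1` H1 `&` val @^-1` H2) (exist _ x (ES Ex)) by [].
by rewrite dj.
Qed.

Lemma induced_pre (N : Type) (t : N -> X -> set X -> R) i w H :
  (forall w, pba A (t i w)) -> (forall w, S w -> t i w E = 1) -> A H ->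
  induced_t S A t i w (val @^-1` H) = t i (val w) H.
Proof.
move=> tp tE AH; rewrite /induced_t.
set H2 := xget _ _.
have [AH2 eH] : [set H' | A H' /\ val @^-1` H = val @^-1` H'] H2.
  by rewrite /H2; apply: xgetPex; exists H.
have mE : forall H, A H -> t i (val w) H = t i (val w) (H `&` E).
  move=> H' AH'; case: (tp (val w)) => ad _.
  by rewrite (fa_split hA ad AH' AE) (pba_conc (tp _) (tE _ (svalP w)) AH') addr0.
rewrite mE // [RHS]mE //; congr (t i _ _); rewrite predeqE => x; split => -[hx Ex]; split => //.
  have := congr1 (fun P => P (exist _ x (ES Ex))) eH => /= ->; exact: hx.
have := congr1 (fun P => P (exist _ x (ES Ex))) eH => /= <-; exact: hx.
Qed.


Lemma Bspace_pre (f : X -> R) : B_space A f -> B_space (trace S A) (f \o val).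
Proof.
move=> Bf eps eps0; have [n [c [B [FB hB]]]] := Bf eps eps0.
exists n, c, (fun k => val @^-1` (B k)); split => [k|x]; first exact: trace_pre.
exact: hB.
Qed.

Lemma conv_pair (N : Type) (t : N -> X -> set X -> R) i nu' :
  (forall w, pba A (t i w)) -> (forall w F, A F -> 0 <= t i w F <= 1) ->
  (forall w, S w -> t i w E = 1) ->
  conv_hull (range (induced_t S A t i)) nu' ->
  exists nu, [/\ ba_fun A nu, (forall H, A H -> nu H = nu' (val @^-1` H)),
     (forall H, A H -> nu (H `&` ~` E) = 0) & conv_hull (range (t i)) nu].
Proof.
move=> tp t01 tE [m [lam [Q [l0 [l1 [hQ ->]]]]]].
have /choice [wf hw] : forall k, exists w, induced_t S A t i w = Q k.
  by move=> k; case: (hQ k) => w _ e; exists w.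
exists (fun F => \sum_(k < m.+1) lam k * t i (val (wf k)) F); split.
- apply: conv_ba => // k F AF; by have /andP[] := t01 (val (wf k)) F AF.
- by move=> H AH; apply: eq_bigr => k _; rewrite -hw induced_pre.
- move=> H AH; apply: big1 => k _.
  by rewrite (pba_conc (tp _) (tE _ (svalP (wf k))) AH) mulr0.
- exists m, lam, (fun k => t i (val (wf k))).
  split; [done|split; [done|split; [|done]]] => k; by exists (val (wf k)).
Qed.


Lemma Pi_bwd (N : Type) (t : N -> X -> set X -> R) i P' :
  (forall w, pba A (t i w)) -> (forall w F, A F -> 0 <= t i w F <= 1) ->
  (forall w, S w -> t i w E = 1) ->
  Pi (trace S A) (induced_t S A t) i P' -> Pi A t i (fun F => P' (val @^-1` F)).
Proof.
move=> tp t01 tE [[adP' [c0 bdP']] hw].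
have hT := trace_field.
case: (hA) => AT [AC AI].
have conc : forall H, A H -> P' (val @^-1` (H `&` ~` E)) = 0.
  move=> H AH.
  have AG : A (H `&` ~` E) by apply: AI => //; apply: AC.
  set G := val @^-1` (H `&` ~` E).
  have FG : trace S A G := trace_pre AG.
  have BG : B_space (trace S A) (ind G) := Bspace_ind FG.
  apply/eqP; rewrite -normr_le0; apply/ler_addgt0Pr => e e0; rewrite add0r.
  have [nu' hnu' hcl] := hw 1%N (fun _ => ind G) (fun _ => BG) e e0.
  have := hcl ord0 => /=.
  rewrite (ba_int_unique BG (int_ind hT (conj adP' (ex_intro _ c0 bdP')) FG)).
  have [nu [bnu h1 h2 _]] := conv_pair tp t01 tE hnu'.
  have -> : ind G = (ind (H `&` ~` E)) \o val by [].
  rewrite -(transfer h1 h2 (proj1 bnu) (Bspace_ind AG)).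
  by rewrite (ba_int_unique (Bspace_ind AG) (int_ind hA bnu AG)) h2 // subr0 => /ltW.
have adP : fin_additive A (fun F => P' (val @^-1` F)).
  move=> F1 F2 AF1 AF2 d; rewrite preimage_setU adP' //; [exact: trace_pre|exact: trace_pre|].
  by rewrite -preimage_setI d preimage_set0.
split.
  split => //; exists c0 => F AF; exact: bdP' (trace_pre AF).
move=> n f hf eps eps0.
have [nu' hnu' hcl] := hw n (fun k => f k \o val) (fun k => Bspace_pre (hf k)) eps eps0.
have [nu [bnu h1 h2 hnu]] := conv_pair tp t01 tE hnu'.
exists nu => // k.
rewrite (@transfer (fun F => P' (val @^-1` F)) P' (f k) (fun _ _ => erefl) conc adP (hf k)).
by rewrite (transfer h1 h2 (proj1 bnu) (hf k)); apply: hcl.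
Qed.

End Transfer.

Lemma Pi_fwd {X N} (A : set (set X)) (t : N -> X -> set X -> R) i P :
  is_field A -> (forall w, pba A (t i w)) -> (forall w F, A F -> 0 <= t i w F <= 1) ->
  Pi A t i P ->
  Pi (trace setT A) (induced_t setT A t) i
     (fun G => P (xget set0 [set H | A H /\ G = (@proj1_sig X setT) @^-1` H])).
Proof.
move=> hA tp t01 [[adP [c0 bdP]] hw].
set P' := (fun G => P (xget set0 [set H | A H /\ G = (@proj1_sig X setT) @^-1` H])).
have AT : A setT by case: hA.
have ES : (setT : set X) `<=` setT by [].
have hP1 : forall H, A H -> P H = P' ((@proj1_sig X setT) @^-1` H).
  move=> H AH; rewrite /P'.
  set H2 := xget _ _.
  have [AH2 eH] : [set H' | A H' /\ (@proj1_sig X setT) @^-1` H = (@proj1_sig X setT) @^-1` H'] H2.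
    by rewrite /H2; apply: xgetPex; exists H.
  congr P; rewrite predeqE => x.
  by have := congr1 (fun Q => Q (exist _ x I)) eH => /= ->.
have h2 : forall H, A H -> P (H `&` ~` setT) = 0.
  by move=> H AH; rewrite setCT setI0 (fa_set0 adP (field_set0 hA)).
have hT := trace_field setT hA.
split.
  split; first exact: (mu'_additive hA AT ES adP h2 hP1).
  by exists c0 => _ [H AH ->]; rewrite -hP1 //; exact: bdP.
move=> n f' hf' eps eps0.
pose f k x := f' k (exist _ x I).
have ef : forall k, f' k = f k \o (@proj1_sig X setT).
  by move=> k; apply/funext => -[x []].
have hf : forall k, B_space A (f k).
  move=> k e e0; have [m [c [B [FB hB]]]] := hf' k e e0.
  have /choice [H hH] : forall j, exists H, A H /\ B j = (@proj1_sig X setT) @^-1` H.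
    by move=> j; case: (FB j) => H AH ej; exists H.
  exists m, c, H; split => [j|x]; first by case: (hH j).
  have := hB (exist _ x I); rewrite /simple_fn; congr (`|_ - _| <= _); apply: eq_bigr => j _.
  by case: (hH j) => _ ->.
have [nu hnu hcl] := hw n f hf eps eps0.
case: hnu => m [lam [Q [l0 [l1 [hQ eQ]]]]].
have /choice [wf hwf] : forall k, exists w, t i w = Q k.
  by move=> k; case: (hQ k) => w _ e; exists w.
pose nu' := fun G => \sum_(k < m.+1) lam k * induced_t setT A t i (exist _ (wf k) I) G.
exists nu'.
  exists m, lam, (fun k => induced_t setT A t i (exist _ (wf k) I)).
  split; [done|split; [done|split; [|done]]] => k; by exists (exist _ (wf k) I).
move=> k; rewrite ef.
have tE : forall w, setT w -> t i w setT = 1 by move=> w _; case: (tp w) => _ [_ ->].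
have hn1 : forall H, A H -> nu H = nu' ((@proj1_sig X setT) @^-1` H).
  move=> H AH; rewrite eQ /nu'; apply: eq_bigr => j _.
  by rewrite (induced_pre hA AT ES) // hwf.
have bnu : ba_fun A nu.
  rewrite eQ; apply: conv_ba => // [j|j F AF]; rewrite -hwf //.
  by have /andP[] := t01 (wf j) F AF.
have hn2 : forall H, A H -> nu (H `&` ~` setT) = 0.
  by move=> H AH; rewrite setCT setI0 (fa_set0 (proj1 bnu) (field_set0 hA)).
rewrite -(transfer hA AT ES hP1 h2 adP (hf k)) -(transfer hA AT ES hn1 hn2 (proj1 bnu) (hf k)).
exact: hcl.
Qed.

End Aux.

Unset Implicit Arguments.
Theorem proposition3 (R : realType) (Om N : Type) (A : set (set Om))
    (M : N -> set (set Om)) (t : N -> Om -> set Om -> R) :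
  type_space A M t ->
  (consistent A M t <->
   exists S : set Om, common_certainty_component A t S /\
     consistent (trace S A) (fun i => trace S (M i)) (induced_t S A t)).
Proof.
move=> [[i0] [hA [hM [t01 [tp [tB tM]]]]]]; split.
- move=> hc.
  have [P0 hP0] := hc [set i0] (finite_set1 i0).
  have [_ hw] := hP0 i0 (erefl i0).
  have hB0 : forall k : 'I_0, B_space A (fun _ : Om => 0 : R) by move=> [].
  have [nu hnu _] := hw 0%N (fun _ _ => 0) hB0 1 ltr01.
  case: hnu => m [lam [Q [_ [_ [hQ _]]]]]; case: (hQ ord0) => w0 _ _.
  exists setT; split.
    split; first by exists w0.
    exists setT; split; first by case: hA.
    split => // i w _; by case: (tp i w) => _ [_ ->].
  move=> I fI; have [P hP] := hc I fI.
  exists (fun G => P (xget set0 [set H | A H /\ G = (@proj1_sig Om setT) @^-1` H])) => i Ii.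
  by apply: Pi_fwd => //; [exact: t01 | exact: hP].
- move=> [S [cc hc]]; rewrite /consistent => I fI; case: cc => [[w0 Sw0] [E [AE [ES hE]]]].
  have [P' hP'] := hc I fI.
  exists (fun F => P' ((@proj1_sig Om S) @^-1` F)) => i Ii.
  apply: (Pi_bwd hA AE ES (tp i) (fun w F AF => t01 i w F AF) (fun w Sw => hE i w Sw)).
  exact: hP'.
Qed.
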